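(* Let $\mathcal{A},\mathcal{B}$ be test spaces with outcome sets $X,Y$, and let $\omega$ be a probability weight on $\mathcal{A}\times\mathcal{B}$. Then $\omega$ exhibits no influence from $\mathcal{B}$ to $\mathcal{A}$ iff $\omega\in\Pr(\overrightarrow{\mathcal{A}\mathcal{B}})$; $\omega$ exhibits no influence from $\mathcal{A}$ to $\mathcal{B}$ iff $\omega\in\Pr(\overleftarrow{\mathcal{A}\mathcal{B}})$; and $\omega$ is non-signaling iff $\omega\in\Pr(\overrightarrow{\mathcal{A}\mathcal{B}}\cup\overleftarrow{\mathcal{A}\mathcal{B}})$.
   Context: A test space is an irredundant collection of nonempty sets (tests). For a collection $\mathcal{T}$ of subsets of $X\times Y$, $\Pr(\mathcal{T})$ is the set of functions $\omega:X\times Y\to[0,1]$ with $\sum_{(x,y)\in S}\omega(x,y)=1$ for every $S\in\mathcal{T}$. $\mathcal{A}\times\mathcal{B}=\{E\times F:E\in\mathcal{A},F\in\mathcal{B}\}$. The forward product $\overrightarrow{\mathcal{A}\mathcal{B}}$ consists of all sets $\bigcup_{x\in E}\{x\}\times F_x$ with $E\in\mathcal{A}$ and $F:E\to\mathcal{B}$; the backward product $\overleftarrow{\mathcal{A}\mathcal{B}}$ consists of all sets $\bigcup_{y\in F}E_y\times\{y\}$ with $F\in\mathcal{B}$ and $E:F\to\mathcal{A}$. Write $\omega(E,y)=\sum_{x\in E}\omega(x,y)$ and $\omega(x,F)=\sum_{y\in F}\omega(x,y)$. $\omega$ exhibits no influence from $\mathcal{A}$ to $\mathcal{B}$ if $\omega(E,y)=\omega(E',y)$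 for all $E,E'\in\mathcal{A}$, $y\in Y$; no influence from $\mathcal{B}$ to $\mathcal{A}$ if $\omega(x,F)=\omega(x,F')$ for all $F,F'\in\mathcal{B}$, $x\in X$; and is non-signaling if both hold. *)

(* Defs.v *)
(* Outcome sets are arbitrary (possibly infinite)
   choiceTypes; sums over (possibly infinite) sets are unordered sums of
   nonnegative terms, i.e. esum in the extended reals. *)
From HB Require Import structures.
From mathcomp Require Import all_boot all_order all_algebra.
From mathcomp Require Import all_classical all_reals.
From mathcomp Require Import esum.
Set Implicit Arguments. Unset Strict Implicit. Unset Printing Implicit Defensive.
Import Order.TTheory GRing.Theory Num.Theory.
Local Open Scope classical_set_scope.
Local Open Scope ring_scope.

Definition test_space (X : Type) (A : set (set X)) : Prop :=
  [/\ (forall E, A E -> E !=set0),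
      (forall E F, A E -> A F -> E `<=` F -> E = F) &
      \bigcup_(E in A) E = setT].

Section Defs.
Variables (R : realType) (X Y : choiceType).

Definition Pr (T : set (set (X * Y))) : set (X * Y -> R) :=
  [set w | (forall p, 0 <= w p <= 1) /\
           (forall S, T S -> (\esum_(p in S) (w p)%:E = 1)%E)].

Definition prod_ts (A : set (set X)) (B : set (set Y)) : set (set (X * Y)) :=
  [set E `*` F | E in A & F in B].

Definition fwd_prod (A : set (set X)) (B : set (set Y)) : set (set (X * Y)) :=
  [set S | exists E (F : X -> set Y), [/\ A E, (forall x, E x -> B (F x)) &
           S = \bigcup_(x in E) ([set x] `*` F x)]].

Definition bwd_prod (A : set (set X)) (B : set (set Y)) : set (set (X * Y)) :=
  [set S | exists F (E : Y -> set X), [/\ B F, (forall y, F y -> A (E y)) &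
           S = \bigcup_(y in F) (E y `*` [set y])]].

Definition margL (w : X * Y -> R) (E : set X) (y : Y) : \bar R :=
  (\esum_(x in E) (w (x, y))%:E)%E.
Definition margR (w : X * Y -> R) (x : X) (F : set Y) : \bar R :=
  (\esum_(y in F) (w (x, y))%:E)%E.

Definition no_infl_AB (A : set (set X)) (B : set (set Y)) (w : X * Y -> R) :=
  forall E E' y, A E -> A E' -> margL w E y = margL w E' y.
Definition no_infl_BA (A : set (set X)) (B : set (set Y)) (w : X * Y -> R) :=
  forall F F' x, B F -> B F' -> margR w x F = margR w x F'.
Definition non_signaling A B w := no_infl_AB A B w /\ no_infl_BA A B w.
End Defs.

(* Main.v *)
Require Import Defs.
From mathcomp Require Import all_boot all_order all_algebra.
From mathcomp Require Import all_classical all_reals esum.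
Import Order.TTheory GRing.Theory Num.Theory.
Local Open Scope classical_set_scope.
Local Open Scope ring_scope.

Lemma fwd_esum (R : realType) (X Y : choiceType) (w : X*Y -> R) (E : set X) (F : X -> set Y) :
  (forall p, 0 <= w p) ->
  (\esum_(p in \bigcup_(x in E) ([set x] `*` F x)) (w p)%:E = \esum_(x in E) margR w x (F x))%E.
Proof.
move=> w0; rewrite /margR esum_esum; last by move=> i j _ _; rewrite lee_fin.
rewrite (_ : \bigcup_(x in E) ([set x] `*` F x) = E `*`` F).
  by apply: eq_esum => -[a b].
apply/seteqP; split => [[a b]/= [x Ex [/= -> Fb]]|[a b] /= [Ea Fb]] //.
by exists a => //.
Qed.

Lemma bwd_esum (R : realType) (X Y : choiceType) (w : X*Y -> R) (F : set Y) (E : Y -> set X) :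
  (forall p, 0 <= w p) ->
  (\esum_(p in \bigcup_(y in F) (E y `*` [set y])) (w p)%:E = \esum_(y in F) margL w (E y) y)%E.
Proof.
move=> w0; rewrite /margL esum_esum; last by move=> i j _ _; rewrite lee_fin.
rewrite (reindex_esum (F `*`` E) _ (fun k => (k.2, k.1))) //.
split.
- by move=> [b a] /= [Fb Ea]; exists b => //; split.
- by move=> [b a] [b' a'] _ _ /= [-> ->].
- by move=> [a b] /= [y Fy [/= Ea ->]]; exists (y, a).
Qed.

Lemma cancel1 (R : realType) (a b b' : \bar R) : (0 <= a)%E -> (0 <= b)%E -> 
  (b + a = 1)%E -> (b' + a = 1)%E -> b = b'.
Proof.
move=> a0 b0 h1 h2.
have af : a \is a fin_num.
  rewrite ge0_fin_numE //; apply: (le_lt_trans (y := 1%E)); last exact: ltry.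
  by rewrite -h1 leeDr.
by rewrite -(addeK b af) -(addeK b' af) h1 h2.
Qed.

Theorem lemma3p3 (R : realType) (X Y : choiceType)
    (A : set (set X)) (B : set (set Y)) (w : X * Y -> R) :
  test_space A -> test_space B -> Pr (prod_ts A B) w ->
  [/\ no_infl_BA A B w <-> Pr (fwd_prod A B) w,
      no_infl_AB A B w <-> Pr (bwd_prod A B) w &
      non_signaling A B w <-> Pr (fwd_prod A B `|` bwd_prod A B) w].
Proof.
move=> [A0 _ Acov] [B0 _ Bcov] [w01 Hprod].
have w0 p : 0 <= w p by case/andP: (w01 p).
have mR0 x F : (0 <= margR w x F)%E by apply: esum_ge0 => y _; rewrite lee_fin.
have mL0 E y : (0 <= margL w E y)%E by apply: esum_ge0 => z _; rewrite lee_fin.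
have fwdE : no_infl_BA A B w <-> Pr (fwd_prod A B) w.
  split.
  - move=> NI; split => // S [E [F [AE BF ->]]].
    rewrite fwd_esum //.
    have [x0 Ex0] := A0 E AE.
    transitivity (\esum_(x in E) margR w x (F x0))%E.
      by apply: eq_esum => x Ex; apply: NI (BF x Ex) (BF x0 Ex0).
    rewrite /margR esum_esum; last by move=> i j _ _; rewrite lee_fin.
    rewrite -(Hprod (E `*` F x0)); last first.
      exists E => //. exists (F x0) => //. apply: BF. exact Ex0.
    by apply: eq_esum => -[a b].
  - move=> [_ HF] F F' x BF BF'.
    have : [set: X] x by [].
    rewrite -Acov => -[E AE Ex].
    pose G z := if z == x then F' else F.
    have h1 : (\esum_(z in E) margR w z F = 1)%E.
      rewrite -(HF (\bigcup_(z in E) ([set z] `*` F))).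
        by rewrite (@fwd_esum _ _ _ w E (fun=> F)).
      by exists E, (fun=> F).
    have h2 : (\esum_(z in E) margR w z (G z) = 1)%E.
      rewrite -(HF (\bigcup_(z in E) ([set z] `*` G z))).
        by rewrite (@fwd_esum _ _ _ w E G).
      exists E, G; by split => // z _; rewrite /G; case: ifP.
    have sub : [set x] `<=` E by move=> _ ->.
    rewrite (esumID [set x] E (fun i => margR w i F) (fun i _ => mR0 i _)) in h1.
    rewrite (esumID [set x] E (fun i => margR w i (G i)) (fun i _ => mR0 i _)) in h2.
    rewrite (setIidr sub) !esum_set1 // in h1 h2.
    have eG : (\esum_(i in E `&` ~` [set x]) margR w i (G i) =
               \esum_(i in E `&` ~` [set x]) margR w i F)%E.
      apply: eq_esum => i [_ /= nix]; rewrite /G; case: eqP => //.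
    rewrite eG /G eqxx in h2.
    apply: (@cancel1 _ _ _ _ _ (mR0 x F) h1 h2); apply: esum_ge0 => *; exact: mR0.
have bwdE : no_infl_AB A B w <-> Pr (bwd_prod A B) w.
  split.
  - move=> NI; split => // S [F [E [BF AE ->]]].
    rewrite bwd_esum //.
    have [y0 Fy0] := B0 F BF.
    transitivity (\esum_(y in F) margL w (E y0) y)%E.
      by apply: eq_esum => y Fy; apply: NI (AE y Fy) (AE y0 Fy0).
    rewrite /margL (eq_esum (fun y _ => erefl)) esum_esum; last by move=> i j _ _; rewrite lee_fin.
    rewrite -(Hprod (E y0 `*` F)); last by exists (E y0) => //; [apply: AE | exists F].
    rewrite (reindex_esum (F `*`` fun=> E y0) _ (fun k => (k.2, k.1))) //.
    split.
    + by move=> [b a] /= [].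
    + by move=> [b a] [b' a'] _ _ /= [-> ->].
    + by move=> [a b] /= [Ea Fb]; exists (b, a).
  - move=> [_ HF] E E' y AE AE'.
    have : [set: Y] y by [].
    rewrite -Bcov => -[F BF Fy].
    pose G z := if z == y then E' else E.
    have h1 : (\esum_(z in F) margL w E z = 1)%E.
      rewrite -(HF (\bigcup_(z in F) (E `*` [set z]))).
        by rewrite (@bwd_esum _ _ _ w F (fun=> E)).
      by exists F, (fun=> E).
    have h2 : (\esum_(z in F) margL w (G z) z = 1)%E.
      rewrite -(HF (\bigcup_(z in F) (G z `*` [set z]))).
        by rewrite (@bwd_esum _ _ _ w F G).
      exists F, G; by split => // z _; rewrite /G; case: ifP.
    have sub : [set y] `<=` F by move=> _ ->.
    rewrite (esumID [set y] F (fun i => margL w E i) (fun i _ => mL0 _ i)) in h1.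
    rewrite (esumID [set y] F (fun i => margL w (G i) i) (fun i _ => mL0 _ i)) in h2.
    rewrite (setIidr sub) !esum_set1 // in h1 h2.
    have eG : (\esum_(i in F `&` ~` [set y]) margL w (G i) i =
               \esum_(i in F `&` ~` [set y]) margL w E i)%E.
      apply: eq_esum => i [_ /= niy]; rewrite /G; case: eqP => //.
    rewrite eG /G eqxx in h2.
    apply: (@cancel1 _ _ _ _ _ (mL0 E y) h1 h2); apply: esum_ge0 => *; exact: mL0.
split => //.
split.
- move=> [n1 n2].
  have [_ h1] := proj1 fwdE n2.
  have [_ h2] := proj1 bwdE n1.
  split => // S [] ?; [exact: h1 | exact: h2].
- move=> [_ h]; split.
  + apply: (proj2 bwdE); split => // S hS; apply: h; exact: (or_intror hS).
  + apply: (proj2 fwdE); split => // S hS; apply: h; exact: (or_introl hS).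
Qed.
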